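(* For every $n\ge1$, the number of permutations $\pi$ of $\{1,\dots,n\}$ whose Schröder insertion tableau $P(\pi)$ consists of a single column (every row has at most $2$ cells) is $2^{n-1}$.
   Context: A Schröder tableau consists of rows $1,2,\dots$; row $r$ has $\lambda_r$ cells at positions $1,\dots,\lambda_r$, each filled with a number; cells at odd positions are upper triangles, at even positions lower triangles. The Schröder insertion tableau $P(\pi)$ of $\pi=\pi_1\cdots\pi_n$ is built as follows. Start with $P$ having one row containing $\pi_1$. For $k=2,\dots,n$, insert $\alpha=\pi_k$ into row $i=1$ by the rule: if row $i$ is empty or $\alpha$ is larger than all its entries, place $\alpha$ in a new cell at the end of row $i$ and stop. Otherwise let $j$ be the position in row $i$ of the smallest entry larger than $\alpha$. If $j$ is even: remove the entry $\beta$ at position $j$, write $\alpha$ there, and insert $\beta$ into row $i+1$ by the same rule. If $j$ is odd and position $j+1$ exists in row $i$ with entry $\beta$: move the entry of position $j$ to position $j+1$, write $\alpha$ at position $j$, and insert $\beta$ into row $i+1$. If $j$ is odd and is the last position of row $i$: move the entry of position $j$ into a new cell at position $j+1$ at the end of row $i$, write $\alpha$ at position $j$, and stop. The final $P$ is $P(\pi)$. *)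

(* Defs.v *)
From mathcomp Require Import all_boot all_fingroup.
Set Implicit Arguments. Unset Strict Implicit. Unset Printing Implicit Defensive.

(* A Schröder tableau is a list of rows; row r is the list of its entries at
   positions 1, 2, ..., lambda_r (stored 0-based: position j is index j-1).
   Odd positions are upper triangles, even positions lower triangles. *)
Definition stableau := seq (seq nat).

(* 0-based index in row [r] of the smallest entry larger than [a]
   (meaningful only when such an entry exists). *)
Definition smallest_larger_idx (r : seq nat) (a : nat) : nat :=
  let gt := [seq x <- r | a < x] in
  index (foldr minn (head 0 gt) gt) r.

Fixpoint sinsert (P : stableau) (a : nat) : stableau :=
  match P with
  | [::] => [:: [:: a]]
  | r :: P' =>
    if all (fun x => x < a) r then rcons r a :: P'
    else
      let j0 := smallest_larger_idx r a in   (* position j = j0 + 1 *)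
      if odd j0 then
        (* j even: bump entry at position j *)
        set_nth 0 r j0 a :: sinsert P' (nth 0 r j0)
      else if j0.+1 < size r then
        (* j odd, position j+1 exists with entry beta *)
        set_nth 0 (set_nth 0 r j0 a) j0.+1 (nth 0 r j0)
          :: sinsert P' (nth 0 r j0.+1)
      else
        (* j odd and last position: shift into new cell, stop *)
        rcons (set_nth 0 r j0 a) (nth 0 r j0) :: P'
  end.

Definition schroderP (pi : seq nat) : stableau :=
  match pi with
  | [::] => [::]
  | x :: s => foldl sinsert [:: [:: x]] s
  end.

Definition single_column (P : stableau) : bool := all (fun r => size r <= 2) P.

Definition perm_word n (s : 'S_n) : seq nat := [seq (s i).+1 | i <- enum 'I_n].

(* Main.v *)
Require Import Defs.
From mathcomp Require Import all_boot all_fingroup zify.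

Fixpoint chunk2 (s : seq nat) : seq (seq nat) :=
  match s with
  | x :: (y :: s') => [:: x; y] :: chunk2 s'
  | [:: x] => [:: [:: x]]
  | [::] => [::]
  end.

Fixpoint ins (a : nat) (s : seq nat) : seq nat :=
  match s with
  | [::] => [:: a]
  | x :: s' => if a < x then a :: s else x :: ins a s'
  end.

Lemma perm_ins a s : perm_eq (ins a s) (a :: s).
Proof.
elim: s => [|x s IH] //=; case: ifP => // _.
rewrite -(perm_cons x) in IH. apply: perm_trans IH _.
by rewrite (perm_catCA [:: x] [:: a] s).
Qed.

Lemma sorted_ins a s : sorted ltn s -> a \notin s -> sorted ltn (ins a s).
Proof.
elim: s => [|x s IH] //= Hs; rewrite inE negb_or => /andP [Hax Has].
case: ifP => Hlt /=; first by rewrite Hlt Hs.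
move: Hs; rewrite !(path_sortedE ltn_trans) => /andP [Hall Hs].
rewrite IH // andbT (perm_all _ (perm_ins a s)) /= Hall andbT.
by rewrite ltn_neqAle eq_sym Hax leqNgt Hlt.
Qed.

Lemma ins_min y s : path ltn y s -> ins y s = y :: s.
Proof. by case: s => [|z s] //= /andP [-> _]. Qed.

Lemma sc_chunk2 s : single_column (chunk2 s).
Proof.
have H : forall n t, size t <= n -> single_column (chunk2 t).
  elim=> [|n IH] [|x [|y t]] //= Hs.
  apply: IH. by apply: leq_trans (leqnSn _) Hs.
exact: (H (size s)).
Qed.

Lemma sinsert_chunk2_aux n : forall s a, size s <= n -> sorted ltn s -> a \notin s ->
  (size s < 2) || (a < nth 0 s 1) ->
  sinsert (chunk2 s) a = chunk2 (ins a s).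
Proof.
  elim: n => [|n IH] [|x [|y s]] a //= Hsz.
  - move=> _; rewrite inE => Hax _.
    rewrite /smallest_larger_idx /= andbT.
    case: (ltngtP x a) => H //=.
    + by rewrite minnn eqxx.
    + by move: Hax; rewrite H eqxx.
  - move=> /andP [Hxy Hs]; rewrite !inE !negb_or => /andP [Hax /andP [Hay Has]] Hy.
    have Hya : (y < a) = false by rewrite ltnNge ltnW.
    rewrite Hya andbF /smallest_larger_idx /=.
    have Hsy : path ltn y s by [].
    have IH' : sinsert (chunk2 s) y = chunk2 (y :: s).
      rewrite -(@ins_min y s Hsy); apply: IH.
      + by apply: leq_trans (leqnSn _) Hsz.
      + by move: Hsy; rewrite (path_sortedE ltn_trans) => /andP [].
      + apply/negP => Hin; move: Hsy; rewrite (path_sortedE ltn_trans).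
        by move=> /andP [/allP /(_ _ Hin)]; rewrite ltnn.
      + clear -Hsy; case: s Hsy => [|z [|w s]] //= /and3P [Hyz Hzw _].
        by apply: ltn_trans Hzw.
    case: (ltngtP x a) => Hxa.
    + rewrite Hy /= minnn (ltn_eqF Hxy) eqxx /= IH'.
      by [].
    + rewrite Hy /=.
      have -> : minn x (minn y x) = x by rewrite (minn_idPr (ltnW Hxy)) minnn.
      by rewrite eqxx /= IH'.
    + by move: Hax; rewrite Hxa eqxx.
Qed.

Lemma sinsert_chunk2 s a : sorted ltn s -> a \notin s ->
  (size s < 2) || (a < nth 0 s 1) ->
  sinsert (chunk2 s) a = chunk2 (ins a s).
Proof. exact: (@sinsert_chunk2_aux (size s)). Qed.

Lemma sinsert_fail s a : sorted ltn s -> 2 <= size s -> nth 0 s 1 < a ->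
  ~~ single_column (sinsert (chunk2 s) a).
Proof.
case: s => [|x [|y s]] //= /andP [Hxy _] _ Hya.
by rewrite (ltn_trans Hxy Hya) Hya.
Qed.

Lemma sinsert_bad P a : ~~ single_column P -> ~~ single_column (sinsert P a).
Proof.
elim: P a => [|r P IH] a //=; rewrite negb_and => Hb.
case/orP: Hb => [Hr|HP].
  have H2 : 2 < size r by rewrite ltnNge.
  case: ifP => _ /=; first by rewrite size_rcons; lia.
  case: ifP => _ /=; first by rewrite size_set_nth; lia.
  case: ifP => _ /=; first by rewrite !size_set_nth; lia.
  by rewrite size_rcons size_set_nth; lia.
case: ifP => _ /=; first by rewrite (negbTE HP) andbF.
case: ifP => _ /=; first by rewrite (negbTE (IH _ HP)) andbF.
case: ifP => _ /=; first by rewrite (negbTE (IH _ HP)) andbF.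
by rewrite (negbTE HP) andbF.
Qed.

Fixpoint goodacc (p : seq nat) (s : seq nat) : bool :=
  match s with
  | [::] => true
  | a :: s' => (count (fun x => x < a) p <= 1) && goodacc (rcons p a) s'
  end.
Definition good w := goodacc [::] w.

Lemma goodacc_cat p s t : goodacc p (s ++ t) = goodacc p s && goodacc (p ++ s) t.
Proof.
elim: s p => [|a s IH] p /=; first by rewrite cats0.
by rewrite IH cat_rcons andbA.
Qed.

Lemma goodacc_rcons p s a :
  goodacc p (rcons s a) = goodacc p s && (count (fun x => x < a) (p ++ s) <= 1).
Proof. by rewrite -cats1 goodacc_cat /= andbT. Qed.

Lemma count_sorted t a : sorted ltn t -> a \notin t ->
  (count (fun x => x < a) t <= 1) = (size t < 2) || (a < nth 0 t 1).
Proof.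
case: t => [|x [|y t]] //=; first by case: (x < a).
rewrite !inE !negb_or => /andP [Hxy Hp] /and3P [Hax Hay Hat].
case: (ltngtP y a) => Hya.
- by rewrite (ltn_trans Hxy Hya); lia.
- have -> : count (fun x => x < a) t = 0.
    apply/eqP; rewrite -leqn0 leqNgt -has_count; apply/hasPn => z Hz.
    move: Hp; rewrite (path_sortedE ltn_trans) => /andP [/allP /(_ _ Hz) Hyz _].
    by rewrite -leqNgt ltnW // (ltn_trans Hya Hyz).
  by case: (x < a).
- by move: Hay; rewrite Hya eqxx.
Qed.

Lemma fold_main x s : uniq (x :: s) ->
  (good (x :: s) -> exists t, [/\ sorted ltn t, perm_eq t (x :: s) &
      foldl sinsert [:: [:: x]] s = chunk2 t]) /\
  (~~ good (x :: s) -> ~~ single_column (foldl sinsert [:: [:: x]] s)).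
Proof.
elim/last_ind: s => [|s a IH].
  by move=> _; split=> // _; exists [:: x].
rewrite -rcons_cons rcons_uniq => /andP [Ha Hu].
have [IH1 IH2] := IH Hu.
rewrite /good goodacc_rcons foldl_rcons cat0s -/(good _).
split.
  move=> /andP [Hg Hc]; have [t [Ht Hpt Hf]] := IH1 Hg.
  have Hat : a \notin t by rewrite (perm_mem Hpt).
  exists (ins a t); split.
  - exact: sorted_ins.
  - apply: perm_trans (perm_ins a t) _.
    by rewrite perm_sym perm_rcons perm_cons perm_sym.
  - rewrite Hf sinsert_chunk2 // -count_sorted //.
    by rewrite ((seq.permP Hpt) (fun x => x < a)).
case Hg: (good (x :: s)) => /=; last first.
  by move=> _; apply: sinsert_bad; apply: IH2; rewrite Hg.
rewrite -ltnNge => Hc.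
have [t [Ht Hpt Hf]] := IH1 Hg.
have Hat : a \notin t by rewrite (perm_mem Hpt).
have H2 : 1 < count (fun y => y < a) t by rewrite ((seq.permP Hpt) (fun y => y < a)).
have := @count_sorted t a Ht Hat; rewrite leqNgt H2 /= => /esym /norP [].
rewrite -leqNgt -ltnNge => Hsz Hn.
rewrite Hf; apply: sinsert_fail => //.
rewrite ltn_neqAle -ltnS Hn andbT; apply: contraNneq Hat => <-.
by apply: mem_nth.
Qed.

Lemma single_good w : uniq w -> 0 < size w -> single_column (schroderP w) = good w.
Proof.
case: w => [|x s] // Hu _; rewrite /schroderP.
have [H1 H2] := @fold_main x s Hu.
case Hg: (good (x :: s)).
  by have [t [_ _ ->]] := H1 Hg; rewrite sc_chunk2.
by apply/negbTE/H2; rewrite Hg.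
Qed.


Lemma goodL M v : all (fun y => y < M) v -> forall p1 p2,
  goodacc (p1 ++ M :: p2) v = goodacc (p1 ++ p2) v.
Proof.
elim: v => [|a v IH] //= /andP [HaM Hv] p1 p2.
rewrite !count_cat /= (ltnNge M a) (ltnW HaM) /= add0n.
by rewrite !rcons_cat rcons_cons IH.
Qed.

Lemma good_cons_max M v : all (fun y => y < M) v -> good (M :: v) = good v.
Proof. by move=> H; rewrite /good /= (@goodL M v H [::] [::]). Qed.

Lemma good_second_max M x v : all (fun y => y < M) v ->
  good (x :: M :: v) = good (x :: v).
Proof.
move=> H; rewrite /good /=; case: (x < M) => /=;
by rewrite (@goodL M v H [:: x] [::]).
Qed.

Lemma good_fail M a b p q : a < M -> b < M -> good (a :: b :: p ++ M :: q) = false.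
Proof.
move=> Ha Hb; rewrite /good -[a :: b :: p ++ M :: q]/((a :: b :: p) ++ M :: q).
rewrite goodacc_cat /= Ha Hb; apply/negbTE; rewrite negb_and; apply/orP; right.
by rewrite !add1n.
Qed.

Fixpoint gen n : seq (seq nat) :=
  match n with
  | 0 => [:: [::]]
  | m.+1 => if m is 0 then [:: [:: 1]]
            else [seq m.+1 :: w | w <- gen m] ++ [seq head 0 w :: m.+1 :: behead w | w <- gen m]
  end.

Lemma iota_last n : perm_eq (iota 1 n.+2) (n.+2 :: iota 1 n.+1).
Proof.
have -> : iota 1 n.+2 = rcons (iota 1 n.+1) n.+2 by rewrite -cats1 -(iotaD 1 n.+1 1) addn1.
by rewrite perm_rcons.
Qed.

Lemma gen_mem n w : (w \in gen n.+1) = perm_eq w (iota 1 n.+1) && good w.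
Proof.
elim: n w => [|n IH] w.
  rewrite /= inE; apply/eqP/andP => [->|[Hp _]]; first by [].
  have := perm_size Hp; case: w Hp => [|y [|]] // Hp _.
  by have := perm_mem Hp y; rewrite !inE eqxx => /esym /eqP ->.
have -> : gen n.+2 = [seq n.+2 :: w | w <- gen n.+1] ++
     [seq head 0 w :: n.+2 :: behead w | w <- gen n.+1] by [].
have Hall : forall v, perm_eq v (iota 1 n.+1) -> all (fun y => y < n.+2) v.
  move=> v Hp; rewrite (perm_all _ Hp); apply/allP => y; rewrite mem_iota; lia.
rewrite mem_cat; apply/idP/idP.
  case/orP=> /mapP [v Hv ->]; rewrite IH in Hv; case/andP: Hv => Hp Hg.
    rewrite good_cons_max ?Hall // Hg andbT.
    by rewrite perm_sym (permPl (iota_last n)) perm_cons perm_sym.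
  have := perm_size Hp; rewrite size_iota; case: v Hp Hg => [|x v] // Hp Hg _ /=.
  have Hv : all (fun y => y < n.+2) v by have := Hall _ Hp => /andP [].
  rewrite good_second_max // Hg andbT.
  rewrite (perm_catCA [:: x] [:: n.+2] v) /= perm_sym (permPl (iota_last n)).
  by rewrite perm_cons perm_sym.
case/andP => Hp Hg.
have Hsz := perm_size Hp; rewrite size_iota in Hsz.
have HM : n.+2 \in w by rewrite (perm_mem Hp) mem_iota; lia.
have Hu : uniq w by rewrite (perm_uniq Hp) iota_uniq.
have Hle : all (fun y => y <= n.+2) w.
  rewrite (perm_all _ Hp); apply/allP => y; rewrite mem_iota; lia.
have Hp' := Hp; rewrite (permPr (iota_last n)) in Hp'.
case: w Hp Hg Hsz HM Hu Hle Hp' => [|a [|b r]] // Hp Hg _ HM Hu Hle Hp'.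
have [Ea|Na] := eqVneq a n.+2.
  subst a; apply/orP; left; apply/mapP; exists (b :: r) => //.
  rewrite IH; move: Hp'; rewrite perm_cons => ->.
  rewrite -(@good_cons_max n.+2 (b :: r)) // .
  apply/allP => y Hy; move: Hu => /andP [Hn _].
  have : y <= n.+2 by move/allP: Hle; apply; rewrite inE Hy orbT.
  by rewrite leq_eqVlt => /orP [/eqP Ey|//]; move: Hn; rewrite -Ey Hy.
have [Eb|Nb] := eqVneq b n.+2.
  subst b; apply/orP; right; apply/mapP; exists (a :: r) => //.
  have Hr : all (fun y => y < n.+2) r.
    apply/allP => y Hy; move: Hu => /= /and3P [_ Hn _].
    have : y <= n.+2 by move/allP: Hle; apply; rewrite !inE Hy !orbT.
    by rewrite leq_eqVlt => /orP [/eqP Ey|//]; move: Hn; rewrite -Ey Hy.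
  rewrite IH -(@good_second_max n.+2 a r Hr) Hg andbT.
  move: Hp'; rewrite (perm_catCA [:: a] [:: n.+2] r) /= perm_cons.
  by [].
have HMr : n.+2 \in r by move: HM; rewrite !inE eq_sym (negbTE Na) eq_sym (negbTE Nb) /=.
exfalso; move: Hg Hle; case/splitPr: HMr => p q Hg Hle.
move: Hg; rewrite good_fail //.
- by move: Hle => /= /andP [Ha _]; rewrite ltn_neqAle Na.
- by move: Hle => /= /and3P [_ Hb _]; rewrite ltn_neqAle Nb.
Qed.

Lemma size_gen n : size (gen n.+1) = 2 ^ n.
Proof.
elim: n => [|n IH] //.
have -> : gen n.+2 = [seq n.+2 :: w | w <- gen n.+1] ++
     [seq head 0 w :: n.+2 :: behead w | w <- gen n.+1] by [].
by rewrite size_cat !size_map IH expnS mul2n addnn.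
Qed.

Lemma gen_uniq n : uniq (gen n.+1).
Proof.
elim: n => [|n IH] //.
have -> : gen n.+2 = [seq n.+2 :: w | w <- gen n.+1] ++
     [seq head 0 w :: n.+2 :: behead w | w <- gen n.+1] by [].
have Hne : forall v, v \in gen n.+1 -> exists x v', v = x :: v' /\ x < n.+2.
  move=> v; rewrite gen_mem => /andP [Hp _].
  have := perm_size Hp; rewrite size_iota; case: v Hp => [|x v] // Hp _.
  exists x, v; split => //.
  by have := perm_mem Hp x; rewrite inE eqxx mem_iota => /esym; lia.
rewrite cat_uniq map_inj_uniq; last by move=> ? ? [].
rewrite IH map_inj_in_uniq ?IH ?andbT; last first.
  move=> u v /Hne [x [u' [-> _]]] /Hne [y [v' [-> _]]] /= [-> ->].
  by [].
apply/hasPn => w /mapP [v Hv ->]; apply/negP => /mapP [u _ E].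
have [x [v' [Ev Hx]]] := Hne _ Hv; subst v; case: E => Ex.
by move: Hx; rewrite Ex ltnn.
Qed.

Lemma perm_word_inj n : injective (@perm_word n).
Proof.
move=> s t /eq_in_map H; apply/permP => i; apply/val_inj; apply: succn_inj.
by apply: H; rewrite mem_enum.
Qed.

Lemma perm_word_perm n (s : 'S_n) : perm_eq (perm_word s) (iota 1 n).
Proof.
apply: uniq_perm.
- rewrite /perm_word map_inj_uniq ?enum_uniq // => i j /succn_inj /val_inj; exact: perm_inj.
- exact: iota_uniq.
move=> y; rewrite mem_iota; apply/mapP/idP.
  by move=> [i _ ->]; rewrite /= add1n ltnS ltn_ord.
case: y => [|k] //= Hk0; have Hk : k < n by lia.
exists (s^-1 (Ordinal Hk))%g; first by rewrite mem_enum.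
by rewrite permKV.
Qed.

Lemma perm_word_onto m w : perm_eq w (iota 1 m.+1) -> exists s : 'S_m.+1, perm_word s = w.
Proof.
move=> Hp.
have Hsz : size w = m.+1 by rewrite (perm_size Hp) size_iota.
have Hu : uniq w by rewrite (perm_uniq Hp) iota_uniq.
have Hr : forall i, i < m.+1 -> 0 < nth 0 w i <= m.+1.
  move=> i Hi; have : nth 0 w i \in iota 1 m.+1.
    by rewrite -(perm_mem Hp) mem_nth // Hsz.
  rewrite mem_iota; lia.
pose f := fun i : 'I_m.+1 => (inord (nth 0 w i).-1 : 'I_m.+1).
have Hf : forall i : 'I_m.+1, (f i).+1 = nth 0 w i.
  move=> i; have H := Hr i (ltn_ord i); rewrite /f inordK; lia.
have Hinj : injective f.
  move=> i j E; apply/val_inj.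
  have E' : nth 0 w i = nth 0 w j by rewrite -!Hf E.
  apply/eqP; rewrite -(nth_uniq 0 _ _ Hu) ?Hsz ?ltn_ord //; exact/eqP.
exists (perm Hinj); rewrite /perm_word.
rewrite (eq_map (g := fun i : 'I_m.+1 => nth 0 w i)); last by move=> i; rewrite permE Hf.
rewrite (_ : [seq nth 0 w i | i : 'I_m.+1 <- enum 'I_m.+1] = [seq nth 0 w i | i <- map val (enum 'I_m.+1)]); last by rewrite -map_comp.
rewrite val_enum_ord map_nth_iota0 ?Hsz //.
by rewrite -Hsz take_size.
Qed.

Theorem mainTheorem10 (n : nat) : 0 < n ->
  #|[set s : 'S_n | single_column (schroderP (perm_word s))]| = 2 ^ (n - 1).
Proof.
case: n => [|m] // _; rewrite subn1 /=.
set A := [set s : 'S_m.+1 | _].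
rewrite cardE -(size_map (@perm_word m.+1)) -(size_gen m).
apply: perm_size; apply: uniq_perm.
- by rewrite map_inj_uniq ?enum_uniq //; exact: perm_word_inj.
- exact: gen_uniq.
move=> w; apply/mapP/idP.
  move=> [s Hs ->]; rewrite mem_enum inE in Hs.
  have Hp := @perm_word_perm _ s.
  rewrite gen_mem Hp /= -single_good //.
    by rewrite (perm_uniq Hp) iota_uniq.
  by rewrite (perm_size Hp) size_iota.
rewrite gen_mem => /andP [Hp Hg].
have [s Hs] := @perm_word_onto m w Hp.
exists s => //; rewrite mem_enum inE Hs single_good //.
  by rewrite (perm_uniq Hp) iota_uniq.
by rewrite (perm_size Hp) size_iota.
Qed.
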